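(* For every $n\ge1$: if $Q_{2n}$ has a source cycle, then $Q_{4n}$ has a source cycle.
   Context: $Q_{2n}$ is realized as $G_{1,n}$: the graph on quaternary strings $q_1\cdots q_n$, $q_i\in\{0,1,2,3\}$, adjacent iff they differ in exactly one position by $\pm1\pmod4$; origin $\mathbf 0$. A permutation $\sigma$ of $\{1,\dots,n\}$ acts by $\sigma(q_1,\dots,q_n)=(q_{\sigma^{-1}(1)},\dots,q_{\sigma^{-1}(n)})$, an automorphism fixing $\mathbf 0$. A directed Hamilton cycle $H$ of $Q_{2n}$ starting at $\mathbf 0$ is a source cycle if there is an $n\times n$ Latin square $M=(m_{ij})$ on $\{1,\dots,n\}$ with first row the identity such that, with $\sigma_i(j)=m_{ij}$, the edge sets of $\sigma_1(H),\dots,\sigma_n(H)$ partition the edge set of $Q_{2n}$. *)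

(* Defs.v *)
From mathcomp Require Import all_boot all_order all_fingroup.
Set Implicit Arguments. Unset Strict Implicit. Unset Printing Implicit Defensive.

(* Vertices of G_{1,n} (= Q_{2n}): quaternary strings q_1...q_n,
   represented as functions 'I_n -> 'I_4 (positions indexed 0..n-1). *)
Definition vtx (n : nat) := {ffun 'I_n -> 'I_4}.

Definition origin (n : nat) : vtx n := [ffun => ord0].

Definition pm1 (a b : 'I_4) : bool :=
  ((a + 1) %% 4 == b) || ((b + 1) %% 4 == a).

Definition adj (n : nat) (u v : vtx n) : bool :=
  [exists k : 'I_n, pm1 (u k) (v k) && [forall j : 'I_n, (j != k) ==> (u j == v j)]].

Definition ham_cycle (n : nat) (H : seq (vtx n)) : Prop :=
  [/\ uniq H, size H = #|{: vtx n}|, head (origin n) H = origin n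
    & path.cycle (@adj n) H].

Definition cycle_edge (n : nat) (H : seq (vtx n)) (u v : vtx n) : bool :=
  ((u, v) \in zip H (rot 1 H)) || ((v, u) \in zip H (rot 1 H)).

Definition pact (n : nat) (s : {perm 'I_n}) (q : vtx n) : vtx n :=
  [ffun i => q ((s^-1)%g i)].

(* H is a source cycle: there is a Latin square M on {1..n} with first row
   the identity, whose rows are sigma_i (sigma_i(j) = m_ij), such that the
   edge sets of sigma_1(H), ..., sigma_n(H) partition the edge set of Q_{2n}. *)
Definition source_cycle (n : nat) (H : seq (vtx n)) : Prop :=
  ham_cycle H /\
  exists sigma : 'I_n -> {perm 'I_n},
    (* rows are permutations (built in); columns are injective: Latin *)
    (forall j : 'I_n, injective (fun i : 'I_n => sigma i j)) /\
    (forall i : 'I_n, val i = 0 -> forall j, sigma i j = j) /\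
    (forall u v : vtx n, adj u v ->
       #|[set i : 'I_n | cycle_edge (map (pact (sigma i)) H) u v]| = 1).

(* Main.v *)
Require Import Defs.
From mathcomp Require Import all_boot all_order all_fingroup.
From mathcomp Require Import zify.
Set Implicit Arguments. Unset Strict Implicit. Unset Printing Implicit Defensive.

Section SeqLemmas.
Variable T : eqType.
Implicit Types (s : seq T) (p q : T).

Lemma path_zip (e : rel T) x l :
  path e x l = all (fun pq => e pq.1 pq.2) (zip (x :: l) l).
Proof. by elim: l x => [|y l IH] x //=; rewrite IH. Qed.

Lemma zip_rcons_aux x (l : seq T) y :
  zip (x :: rcons l y) (rcons l y) = zip (x :: l) (rcons l y).
Proof. by elim: l x => [|z l IH] x //=; rewrite IH. Qed.

Lemma cycle_zip (e : rel T) s :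
  path.cycle e s = all (fun pq => e pq.1 pq.2) (zip s (rot 1 s)).
Proof.
by case: s => [|x s] //=; rewrite rot1_cons path_zip zip_rcons_aux.
Qed.

Lemma nth_rot1 (z : T) s t : t < size s ->
  nth z (rot 1 s) t = nth z s (t.+1 %% size s).
Proof.
case: s => [|x s] //= lt.
rewrite rot1_cons nth_rcons.
case: (ltnP t (size s)) => h.
  by rewrite modn_small //.
have -> : t = size s by lia.
by rewrite eqxx modnn.
Qed.

Lemma zipP (z : T) s p q :
  reflect (exists2 t, t < size s & nth z s t = p /\ nth z s (t.+1 %% size s) = q)
          ((p, q) \in zip s (rot 1 s)).
Proof.
have sz : size (zip s (rot 1 s)) = size s by rewrite size_zip size_rot minnn.
apply: (iffP (nthP (z, z))); rewrite sz.
  move=> [t lt]; rewrite nth_zip ?size_rot // nth_rot1 // => -[<- <-].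
  by exists t.
move=> [t lt [<- <-]]; exists t => //.
by rewrite nth_zip ?size_rot // nth_rot1.
Qed.

Lemma cycle_nthP (e : rel T) (z : T) s :
  reflect (forall t, t < size s -> e (nth z s t) (nth z s (t.+1 %% size s)))
          (path.cycle e s).
Proof.
rewrite cycle_zip; apply: (iffP allP).
  move=> H t lt; apply: (H (nth z s t, nth z s (t.+1 %% size s))); apply/(zipP z); by exists t.
by move=> H [p q] /(zipP z) [t lt [<- <-]]; apply: H.
Qed.

Lemma ce_uniq (z : T) s p q : uniq s ->
  ((p, q) \in zip s (rot 1 s)) =
  [&& p \in s, q \in s & index q s == (index p s).+1 %% size s].
Proof.
move=> us; apply/(zipP z)/and3P.
  move=> [t lt [<- <-]].
  have lt' : t.+1 %% size s < size s by rewrite ltn_mod; lia.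
  by rewrite !mem_nth // !index_uniq.
move=> [ps qs /eqP e]; exists (index p s); first by rewrite index_mem.
by rewrite !nth_index // -e nth_index.
Qed.

End SeqLemmas.


Section Pact.
Variable n : nat.
Implicit Types (s : {perm 'I_n}) (u v : vtx n).

Lemma pactE s q i : pact s q (s i) = q i.
Proof. by rewrite /pact ffunE permK. Qed.

Lemma pactK s : cancel (pact s) (pact s^-1).
Proof. by move=> q; apply/ffunP => i; rewrite /pact !ffunE invgK permK. Qed.

Lemma pactKV s : cancel (pact s^-1) (pact s).
Proof. by move=> q; apply/ffunP => i; rewrite /pact !ffunE invgK permKV. Qed.

Lemma ce_map s (H : seq (vtx n)) u v :
  cycle_edge (map (pact s) H) u v = cycle_edge H (pact s^-1 u) (pact s^-1 v).
Proof.
have key : forall a b, ((a, b) \in zip (map (pact s) H) (rot 1 (map (pact s) H))) =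
    ((pact s^-1 a, pact s^-1 b) \in zip H (rot 1 H)).
  move=> a b; apply/(zipP (origin n))/(zipP (origin n)); rewrite size_map.
    move=> [t lt [e1 e2]]; exists t => //.
    have lt' : t.+1 %% size H < size H by rewrite ltn_mod; apply: leq_ltn_trans lt.
    by move: e1 e2; rewrite !(nth_map (origin n)) // => <- <-; rewrite !pactK.
  move=> [t lt [e1 e2]]; exists t => //.
  have lt' : t.+1 %% size H < size H by rewrite ltn_mod; apply: leq_ltn_trans lt.
  by rewrite !(nth_map (origin n)) // e1 e2 !pactKV.
by rewrite /cycle_edge !key.
Qed.

End Pact.


Section Block.
Variable n : nat.

Definition lov (j : nat) := if j < n then j else j - n.
Lemma lov_lt (j : 'I_(2 * n)) : lov j < n.
Proof. rewrite /lov; case: ifP => h //; have := ltn_ord j; lia. Qed.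
Definition lo (j : 'I_(2 * n)) : 'I_n := Ordinal (lov_lt j).

Lemma lft_lt (k : 'I_n) : k < 2 * n. Proof. have := ltn_ord k; lia. Qed.
Lemma rgt_lt (k : 'I_n) : n + k < 2 * n. Proof. have := ltn_ord k; lia. Qed.
Definition lft (k : 'I_n) : 'I_(2 * n) := Ordinal (lft_lt k).
Definition rgt (k : 'I_n) : 'I_(2 * n) := Ordinal (rgt_lt k).

Definition join (u v : vtx n) : vtx (2 * n) :=
  [ffun j : 'I_(2 * n) => if j < n then u (lo j) else v (lo j)].
Definition left (w : vtx (2 * n)) : vtx n := [ffun k => w (lft k)].
Definition right (w : vtx (2 * n)) : vtx n := [ffun k => w (rgt k)].

Lemma lo_lft k : lo (lft k) = k.
Proof. by apply: val_inj; rewrite /= /lov ltn_ord. Qed.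
Lemma lo_rgt k : lo (rgt k) = k.
Proof. apply: val_inj; rewrite /= /lov; case: ifP; lia. Qed.

Lemma left_join u v : left (join u v) = u.
Proof. by apply/ffunP => k; rewrite !ffunE /= ltn_ord lo_lft. Qed.
Lemma right_join u v : right (join u v) = v.
Proof.
apply/ffunP => k; rewrite !ffunE /= lo_rgt; case: ifP => //; lia.
Qed.
Lemma joinK w : join (left w) (right w) = w.
Proof.
apply/ffunP => j; rewrite !ffunE; case: ifP => h.
  by congr (w _); apply: val_inj; rewrite /= /lov h.
by congr (w _); apply: val_inj; rewrite /= /lov h; lia.
Qed.
Lemma join_inj u v u' v' : join u v = join u' v' -> u = u' /\ v = v'.
Proof.
move=> e; split; [have := congr1 left e | have := congr1 right e];
  by rewrite ?left_join ?right_join.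
Qed.

Lemma join_origin : join (origin n) (origin n) = origin (2 * n).
Proof. by apply/ffunP => j; rewrite !ffunE; case: ifP. Qed.

Lemma adj_joinl u v w : adj u v -> adj (join u w) (join v w).
Proof.
move=> /existsP [k /andP [pk /forallP fk]]; apply/existsP; exists (lft k).
rewrite !ffunE /= ltn_ord lo_lft pk /=; apply/forallP => j; apply/implyP => nj.
rewrite !ffunE; case: ifP => // h.
have nlk : lo j != k.
  apply: contra nj => /eqP e; apply/eqP/val_inj; move: e => /(congr1 val) /=.
  by rewrite /lov h => ->.
by have := fk (lo j); rewrite nlk.
Qed.

Lemma adj_joinr u v w : adj u v -> adj (join w u) (join w v).
Proof.
move=> /existsP [k /andP [pk /forallP fk]]; apply/existsP; exists (rgt k).
have nk : (n + k < n) = false by lia.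
rewrite !ffunE /= nk lo_rgt pk /=; apply/forallP => j; apply/implyP => nj.
rewrite !ffunE; case: ifP => // h.
have nlk : lo j != k.
  apply: contra nj => /eqP e; apply/eqP/val_inj; move: e => /(congr1 val) /=.
  rewrite /lov h => e; have := ltn_ord j; lia.
by have := fk (lo j); rewrite nlk.
Qed.

Lemma adj_split u v : adj u v ->
  (adj (left u) (left v) /\ right u = right v) \/
  (left u = left v /\ adj (right u) (right v)).
Proof.
move=> /existsP [k /andP [pk /forallP fk]].
have eqo : forall j, j != k -> u j = v j by move=> j nj; apply/eqP; have := fk j; rewrite nj.
case: (ltnP k n) => hk; [left | right]; split.
- apply/existsP; exists (lo k); rewrite !ffunE.
  have -> : lft (lo k) = k by apply: val_inj; rewrite /= /lov hk.
  rewrite pk /=; apply/forallP => j; apply/implyP => nj; rewrite !ffunE.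
  apply/eqP/eqo; apply: contra nj => /eqP e; apply/eqP/val_inj; rewrite -e /= /lov; case: ifP; have := ltn_ord j; lia.
- apply/ffunP => j; rewrite !ffunE; apply: eqo; apply/eqP => e.
  move: (congr1 val e) => /=; lia.
- apply/ffunP => j; rewrite !ffunE; apply: eqo; apply/eqP => e.
  move: (congr1 val e) => /=; have := ltn_ord j; lia.
- apply/existsP; exists (lo k); rewrite !ffunE.
  have -> : rgt (lo k) = k.
    apply: val_inj; rewrite /= /lov; case: ifP; lia.
  rewrite pk /=; apply/forallP => j; apply/implyP => nj; rewrite !ffunE.
  apply/eqP/eqo; apply: contra nj => /eqP e; apply/eqP/val_inj; rewrite -e /= /lov.
  case: ifP; have := ltn_ord j; lia.
Qed.


Definition blkv (s : {perm 'I_n}) (b : bool) (j : 'I_(2 * n)) : nat :=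
  (if (j < n) (+) b then 0 else n) + s (lo j).
Lemma blkv_lt s b j : blkv s b j < 2 * n.
Proof. rewrite /blkv; have := ltn_ord (s (lo j)); case: ifP; lia. Qed.
Definition blkf s b j : 'I_(2 * n) := Ordinal (blkv_lt s b j).

Lemma lo_val (j j' : 'I_(2 * n)) : (j < n) = (j' < n) -> lo j = lo j' -> j = j'.
Proof.
move=> e1 /(congr1 val) /=; rewrite /lov e1 => e2; apply: val_inj => /=.
move: e2; case: ifP; rewrite -e1; have := ltn_ord j; have := ltn_ord j'; lia.
Qed.

Lemma blkf_lt s b j : (blkf s b j < n) = ((j < n) (+) b).
Proof. rewrite /= /blkv; have := ltn_ord (s (lo j)); case: ifP; lia. Qed.

Lemma lo_blkf s b j : lo (blkf s b j) = s (lo j).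
Proof.
apply: val_inj; rewrite /= /lov /blkv; case: ((j < n) (+) b) => /=; have := ltn_ord (s (lo j)); case: ifP; lia.
Qed.

Lemma blkf_inj s b : injective (blkf s b).
Proof.
move=> j j' e.
have e1 : (j < n) = (j' < n).
  by have := blkf_lt s b j; rewrite e blkf_lt; case: (j < n); case: (j' < n); case: (b).
apply: lo_val e1 _; apply: (@perm_inj _ s); by rewrite -(lo_blkf s b j) -(lo_blkf s b j') e.
Qed.

Definition blk s b : {perm 'I_(2 * n)} := perm (@blkf_inj s b).

Lemma pact_blk s b u v :
  pact (blk s b) (join u v) =
  if b then join (pact s v) (pact s u) else join (pact s u) (pact s v).
Proof.
apply/ffunP => i; rewrite -[i](permKV (blk s b)); move: ((blk s b)^-1 i)%g => j.
rewrite pactE permE.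
have h1 := blkf_lt s b j.
case: b h1 => h1; rewrite !ffunE h1 lo_blkf; case: (j < n);
  by rewrite /= permK.
Qed.

Lemma pact_blkV s b u v :
  pact (blk s b)^-1 (join u v) =
  if b then join (pact s^-1 v) (pact s^-1 u) else join (pact s^-1 u) (pact s^-1 v).
Proof.
apply: (can_inj (pactK (blk s b))); rewrite pactKV; by case: b; rewrite pact_blk ?pactKV.
Qed.


Lemma lft_lo (i : 'I_(2 * n)) : i < n -> lft (lo i) = i.
Proof. by move=> h; apply: val_inj; rewrite /= /lov h. Qed.
Lemma rgt_lo (i : 'I_(2 * n)) : ~~ (i < n) -> rgt (lo i) = i.
Proof. move=> h; apply: val_inj; rewrite /= /lov (negbTE h); lia. Qed.
Lemma lft_ltn (k : 'I_n) : lft k < n. Proof. by rewrite /= ltn_ord. Qed.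
Lemma rgt_ltn (k : 'I_n) : (rgt k < n) = false. Proof. rewrite /=; lia. Qed.

Lemma count_split (X Y Z : 'I_n -> bool) (P : 'I_(2 * n) -> bool) :
  (forall k, (X k || Y k) = Z k /\ ~~ (X k && Y k)) ->
  #|[set k | Z k]| = 1 ->
  (forall i, P i = if i < n then X (lo i) else Y (lo i)) ->
  #|[set i | P i]| = 1.
Proof.
move=> hXY /eqP/cards1P [k0 hk0] hP; apply/eqP/cards1P.
have Zk : forall k, Z k = (k == k0) by move=> k; rewrite -in_set1 -hk0 inE.
exists (if X k0 then lft k0 else rgt k0); apply/setP => i; rewrite !inE hP.
have [h1 h2] := hXY (lo i); have [h3 h4] := hXY k0.
case: ifP => hi.
- case: (boolP (X (lo i))) => hx.
  + have e : lo i = k0 by apply/eqP; rewrite -Zk -h1 hx.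
    by rewrite -e hx lft_lo ?eqxx.
  + apply/esym/negP; case: ifP => hX /eqP ei.
      by move: hx; rewrite ei lo_lft hX.
    by move: hi; rewrite ei rgt_ltn.
- case: (boolP (Y (lo i))) => hy.
  + have e : lo i = k0 by apply/eqP; rewrite -Zk -h1 hy orbT.
    have hx : X (lo i) = false by move: h2; rewrite hy andbT => /negbTE.
    by rewrite -e hx rgt_lo ?hi ?eqxx.
  + apply/esym/negP; case: ifP => hX /eqP ei.
      by move: hi; rewrite ei lft_ltn.
    have e : lo i = k0 by rewrite ei lo_rgt.
    by move: h3; rewrite hX Zk eqxx -e (negbTE hy).
Qed.

End Block.


Section Torus.
Variable N : nat.
Hypothesis hN : 2 < N.

Lemma modDN x : x < 2 * N -> x %% N = if x < N then x else x - N.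
Proof.
case: ifP => h1 h2; first by rewrite modn_small.
have -> : x = (x - N) + N by lia.
by rewrite modnDr modn_small; lia.
Qed.

Definition tx t := (t %% N + N - t %/ N) %% N.
Definition ty t := t %/ N.
Definition ti A B := B * N + (A + B) %% N.
Definition nxt A B := if (A + B) %% N == N.-1 then (A, B.+1 %% N) else (A.+1 %% N, B).

Lemma ti_lt A B : A < N -> B < N -> ti A B < N * N.
Proof. move=> hA hB; have := ltn_pmod (A + B) (ltnW (ltnW hN)); rewrite /ti; nia. Qed.

Lemma tiK A B : A < N -> B < N -> tx (ti A B) = A /\ ty (ti A B) = B.
Proof.
move=> hA hB; have N0 : 0 < N by lia.
have r := ltn_pmod (A + B) N0.
rewrite /tx /ty /ti divnMDl // modnMDl (divn_small r) (modn_small r) addn0; split => //.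
rewrite (@modDN (A + B)); last by lia.
case: ifP => h; rewrite modDN; try lia; case: ifP; lia.
Qed.

Lemma txK t : t < N * N -> [/\ tx t < N, ty t < N & ti (tx t) (ty t) = t].
Proof.
move=> ht; have N0 : 0 < N by lia.
have hy : ty t < N by rewrite /ty ltn_divLR.
have hj := ltn_pmod t N0.
split => //; first by rewrite /tx ltn_mod.
rewrite /ti; suff -> : (tx t + ty t) %% N = t %% N by rewrite /ty -divn_eq.
rewrite /tx.
rewrite (@modDN (t %% N + N - ty t)); last by lia.
case: ifP => h; rewrite modDN; try lia; case: ifP; lia.
Qed.

Lemma ti_inj A B C E : A < N -> B < N -> C < N -> E < N ->
  ti A B = ti C E -> A = C /\ B = E.
Proof.
move=> hA hB hC hE e.
have [a b] := tiK hA hB; have [c d] := tiK hC hE.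
by split; [rewrite -a -c e | rewrite -b -d e].
Qed.

Lemma ti_next A B : A < N -> B < N ->
  (ti A B).+1 %% (N * N) = ti (nxt A B).1 (nxt A B).2.
Proof.
move=> hA hB; have N0 : 0 < N by lia.
have r := ltn_pmod (A + B) N0.
rewrite /nxt /ti; case: eqP => e /=.
- have hAB := @modDN (A + B); rewrite e in hAB.
  case: (ltnP B.+1 N) => hB1.
  + rewrite (modn_small hB1) e (@modDN (A + B.+1)); last by lia.
    rewrite modn_small; last by nia.
    move: hAB; case: ifP => h1 h2; case: ifP => h3; nia.
  + have eB : B = N.-1 by lia.
    have eA : A = 0.
      move: hAB; case: ifP => h1 h2; lia.
    rewrite e eB eA prednK // modnn mul0n add0n addn0 mod0n.
    have -> : (N.-1 * N + N.-1).+1 = N * N by nia.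
    by rewrite modnn.
- rewrite modn_small; last first.
    have : (A + B) %% N < N.-1 by lia.
    nia.
  rewrite -addnS; congr (_ + _).
  have E1 : (A.+1 %% N + B) %% N = ((A + B) %% N + 1) %% N by rewrite !modnDml addSn addn1.
  rewrite E1 (@modn_small ((A + B) %% N + 1)); lia.
Qed.


Lemma modS A : A < N -> A.+1 %% N = if A.+1 == N then 0 else A.+1.
Proof. move=> h; case: eqP => [->|e]; [exact: modnn | rewrite modn_small; lia]. Qed.

Lemma nxt_h A C E : A != C -> ((C, E) == nxt A E) = (C == A.+1 %% N) && ((A + E) %% N != N.-1).
Proof.
move=> /negbTE hAC; rewrite /nxt; case: ifP => _ /=.
  by rewrite xpair_eqE eq_sym hAC andbF.
by rewrite xpair_eqE eqxx !andbT.
Qed.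

Lemma nxt_v A C E : E < N -> ((E, C) == nxt E A) = (C == A.+1 %% N) && ((A + E) %% N == N.-1).
Proof.
move=> hE; rewrite /nxt addnC; case: ifP => _ /=.
  by rewrite xpair_eqE eqxx andbT.
rewrite xpair_eqE andbF; have -> : (E == E.+1 %% N) = false by apply/eqP; rewrite (modS hE); case: ifP; lia.
by [].
Qed.

Lemma not_both A C : A < N -> C < N ->
  ~~ ((C == A.+1 %% N) && (A == C.+1 %% N)).
Proof.
move=> hA hC; rewrite (modS hA) (modS hC).
case: ifP => ?; case: ifP => ?; apply/negP => /andP [/eqP ? /eqP ?]; lia.
Qed.

Lemma nxt_edge A C E : A < N -> C < N -> E < N -> A != C ->
  let X := ((C, E) == nxt A E) || ((A, E) == nxt C E) in
  let Y := ((E, C) == nxt E A) || ((E, A) == nxt E C) in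
  let Z := (C == A.+1 %% N) || (A == C.+1 %% N) in
  (X || Y) = Z /\ ~~ (X && Y).
Proof.
move=> hA hC hE hAC /=.
have hCA : C != A by rewrite eq_sym.
rewrite (nxt_h _ hAC) (nxt_h _ hCA) !nxt_v //.
have := not_both hA hC.
case: (C == A.+1 %% N); case: (A == C.+1 %% N);
  case: ((A + E) %% N == N.-1); case: ((C + E) %% N == N.-1); by [].
Qed.


Lemma nxt_lt A B : A < N -> B < N -> (nxt A B).1 < N /\ (nxt A B).2 < N.
Proof. move=> hA hB; rewrite /nxt; case: ifP => _ /=; rewrite ltn_mod; lia. Qed.

Lemma ti_eq A B C E : A < N -> B < N -> C < N -> E < N ->
  (ti A B == ti C E) = ((A, B) == (C, E)).
Proof.
move=> hA hB hC hE; apply/eqP/eqP => [e | [-> ->]] //.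
by have [-> ->] := ti_inj hA hB hC hE e.
Qed.

End Torus.

Lemma mem_full (T : finType) (s : seq T) : uniq s -> size s = #|T| -> forall x, x \in s.
Proof.
move=> us ss x; apply/negPn/negP => nx.
have u2 : uniq (x :: s) by rewrite /= nx us.
by have := max_card (mem (x :: s)); rewrite (card_uniqP u2) /= ss ltnn.
Qed.

Lemma card_vtx n : #|{: vtx n}| = 4 ^ n.
Proof. by rewrite card_ffun !card_ord. Qed.

Lemma adj_irr n (u : vtx n) : ~~ adj u u.
Proof.
apply/existsP => -[k /andP [pk _]]; move: pk; rewrite /pm1.
by case: (u k) => [[|[|[|[|a]]]] ha].
Qed.

Section Main.
Variable n : nat.
Hypothesis n1 : 1 <= n.
Variable H : seq (vtx n).
Hypotheses (Hu : uniq H) (Hs : size H = #|{: vtx n}|) (Hh : head (origin n) H = origin n)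
  (Hc : path.cycle (@adj n) H).

Local Notation N := (size H).
Lemma hN : 2 < N.
Proof.
have e : 4 ^ n = 4 ^ (n - 1) * 4 by rewrite -expnSr; congr (_ ^ _); lia.
rewrite Hs card_vtx e; have := expn_gt0 4 (n - 1); lia. Qed.

Definition h a := nth (origin n) H a.
Definition io p := index p H.

Lemma memH p : p \in H. Proof. exact: mem_full. Qed.
Lemma io_lt p : io p < N. Proof. by rewrite /io index_mem memH. Qed.
Lemma h_io p : h (io p) = p. Proof. by rewrite /h /io nth_index ?memH. Qed.
Lemma io_h a : a < N -> io (h a) = a. Proof. by move=> ha; rewrite /io /h index_uniq. Qed.
Lemma io_inj : injective io. Proof. by move=> p q e; rewrite -(h_io p) e h_io. Qed.

Lemma ceH p q : cycle_edge H p q = (io q == (io p).+1 %% N) || (io p == (io q).+1 %% N).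
Proof. by rewrite /cycle_edge !(ce_uniq (origin n)) // !memH. Qed.

Lemma adjH a : a < N -> adj (h a) (h (a.+1 %% N)).
Proof. by move=> ha; move/(cycle_nthP _ (origin n)): Hc; apply. Qed.


Definition F t := join (h (tx N t)) (h (ty N t)).
Definition H2 := mkseq F (N * N).

Lemma F_ti A B : A < N -> B < N -> F (ti N A B) = join (h A) (h B).
Proof. by move=> hA hB; rewrite /F; have [-> ->] := tiK hN hA hB. Qed.

Lemma H2_uniq : uniq H2.
Proof.
apply/mkseq_uniqP => t t' ht ht' /join_inj [e1 e2].
have [a1 b1 c1] := txK hN ht; have [a2 b2 c2] := txK hN ht'.
move/(congr1 io): e1; rewrite !io_h // => e1.
move/(congr1 io): e2; rewrite !io_h // => e2.
by rewrite -c1 -c2 e1 e2.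
Qed.

Lemma H2_size : size H2 = #|{: vtx (2 * n)}|.
Proof. by rewrite size_mkseq Hs !card_vtx mul2n -addnn expnD. Qed.

Lemma H2_head : head (origin (2 * n)) H2 = origin (2 * n).
Proof.
have hN' := hN.
rewrite -nth0 nth_mkseq; last by nia.
rewrite /F /tx /ty mod0n div0n subn0 add0n modnn.
by rewrite /h nth0 Hh join_origin.
Qed.

Lemma io2 p1 p2 : index (join p1 p2) H2 = ti N (io p1) (io p2).
Proof.
have h1 := io_lt p1; have h2 := io_lt p2.
rewrite -{1}(h_io p1) -{1}(h_io p2) -F_ti //.
rewrite -(@nth_mkseq _ (origin _) F (N * N)) ?index_uniq ?size_mkseq ?H2_uniq //;
  by apply: (ti_lt hN).
Qed.

Lemma memH2 P : P \in H2.
Proof. apply: mem_full; [exact: H2_uniq | exact: H2_size]. Qed.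

Lemma ce_dir p1 p2 q1 q2 :
  ((join p1 p2, join q1 q2) \in zip H2 (rot 1 H2)) =
  ((io q1, io q2) == nxt N (io p1) (io p2)).
Proof.
have hp1 := io_lt p1; have hp2 := io_lt p2; have hq1 := io_lt q1; have hq2 := io_lt q2.
rewrite (ce_uniq (origin _)) ?H2_uniq // !memH2 /= size_mkseq !io2 ti_next //.
have [n1' n2'] := nxt_lt hN hp1 hp2.
  by rewrite (ti_eq hN) // -surjective_pairing.
exact: hN.
Qed.

Lemma ceH2 p1 p2 q1 q2 : cycle_edge H2 (join p1 p2) (join q1 q2) =
  ((io q1, io q2) == nxt N (io p1) (io p2)) || ((io p1, io p2) == nxt N (io q1) (io q2)).
Proof. by rewrite /cycle_edge !ce_dir. Qed.

Lemma H2_cycle : path.cycle (@adj (2 * n)) H2.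
Proof.
apply/(cycle_nthP _ (origin _)) => t; rewrite size_mkseq => ht.
have hN' := hN.
have ht' : t.+1 %% (N * N) < N * N by rewrite ltn_mod; nia.
rewrite !nth_mkseq //.
have [a b c] := txK hN ht.
have -> : t.+1 %% (N * N) = ti N (nxt N (tx N t) (ty N t)).1 (nxt N (tx N t) (ty N t)).2.
  by rewrite -ti_next // c.
have [n1' n2'] := nxt_lt hN a b.
rewrite F_ti // /F; move: n1' n2'; rewrite /nxt; case: ifP => _ /= n1' n2'.
  exact: adj_joinr (adjH b).
exact: adj_joinl (adjH a).
Qed.

Lemma H2_ham : ham_cycle H2.
Proof. split; [exact: H2_uniq | exact: H2_size | exact: H2_head | exact: H2_cycle]. Qed.

End Main.

Section Final.
Variable n : nat.
Hypothesis n1 : 1 <= n.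
Variable H : seq (vtx n).
Hypotheses (Hu : uniq H) (Hs : size H = #|{: vtx n}|) (Hh : head (origin n) H = origin n)
  (Hc : path.cycle (@adj n) H).
Variable sigma : 'I_n -> {perm 'I_n}.
Hypotheses (Scol : forall j : 'I_n, injective (fun i : 'I_n => sigma i j))
  (Srow : forall i : 'I_n, val i = 0 -> forall j, sigma i j = j)
  (Sedge : forall u v : vtx n, adj u v ->
       #|[set i : 'I_n | cycle_edge (map (pact (sigma i)) H) u v]| = 1).

Definition sig2 (i : 'I_(2 * n)) : {perm 'I_(2 * n)} := blk (sigma (lo i)) (~~ (i < n)).

Lemma sig2_col j : injective (fun i => sig2 i j).
Proof.
move=> i i'; rewrite /sig2 !permE => e.
have e1 : (i < n) = (i' < n).
  have := blkf_lt (sigma (lo i)) (~~ (i < n)) j.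
  rewrite e blkf_lt; case: (i < n); case: (i' < n); case: (j < n); by [].
have e2 := congr1 (@lo n) e; rewrite !lo_blkf in e2.
apply: (lo_val e1); exact: (Scol e2).
Qed.

Lemma sig2_row i : val i = 0 -> forall j, sig2 i j = j.
Proof.
move=> i0 j; rewrite /sig2 permE.
have hi : i < n by rewrite i0.
have hl : val (lo i) = 0 by rewrite /= /lov hi i0.
apply: lo_val; first by rewrite blkf_lt hi addbF.
by rewrite lo_blkf (Srow hl).
Qed.

Lemma sig2_edge u v : adj u v ->
  #|[set i : 'I_(2 * n) | cycle_edge (map (pact (sig2 i)) (H2 H)) u v]| = 1.
Proof.
have hN' := hN n1 Hu Hs Hc.
move=> huv; rewrite -(joinK u) -(joinK v).
have E0 : forall i, cycle_edge (map (pact (sig2 i)) (H2 H)) (join (left u) (right u)) (join (left v) (right v))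
   = cycle_edge (H2 H) (pact (sig2 i)^-1 (join (left u) (right u))) (pact (sig2 i)^-1 (join (left v) (right v))).
  by move=> i; rewrite ce_map.
case: (adj_split huv) => [[a e] | [e a]].
- rewrite e.
  set w := right v; set u1 := left u; set v1 := left v.
  have nuv : u1 != v1 by apply: contraNneq (adj_irr u1) => ee; move: a; rewrite -/u1 -/v1 -ee.
  pose A k := io H (pact (sigma k)^-1 u1).
  pose C k := io H (pact (sigma k)^-1 v1).
  pose E k := io H (pact (sigma k)^-1 w).
  have AC : forall k, A k != C k.
    move=> k; apply: contra nuv => /eqP /(io_inj Hu Hs) /(can_inj (pactKV _)) ->; by [].
  apply: (@count_split n
     (fun k => ((C k, E k) == nxt (size H) (A k) (E k)) || ((A k, E k) == nxt (size H) (C k) (E k)))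
     (fun k => ((E k, C k) == nxt (size H) (E k) (A k)) || ((E k, A k) == nxt (size H) (E k) (C k)))
     (fun k => (C k == (A k).+1 %% size H) || (A k == (C k).+1 %% size H))).
  + move=> k; apply: (nxt_edge hN'); try exact: (io_lt Hu Hs); exact: AC.
  + rewrite -(Sedge a); apply: eq_card => k; rewrite !inE ce_map (ceH Hu Hs); reflexivity.
  + move=> i; rewrite ce_map /sig2 !pact_blkV; case: (i < n) => /=; rewrite (ceH2 n1 Hu Hs Hc); reflexivity.
- rewrite e.
  set w := left v; set u1 := right u; set v1 := right v.
  have nuv : u1 != v1 by apply: contraNneq (adj_irr u1) => ee; move: a; rewrite -/u1 -/v1 -ee.
  pose A k := io H (pact (sigma k)^-1 u1).
  pose C k := io H (pact (sigma k)^-1 v1).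
  pose E k := io H (pact (sigma k)^-1 w).
  have AC : forall k, A k != C k.
    move=> k; apply: contra nuv => /eqP /(io_inj Hu Hs) /(can_inj (pactKV _)) ->; by [].
  apply: (@count_split n
     (fun k => ((E k, C k) == nxt (size H) (E k) (A k)) || ((E k, A k) == nxt (size H) (E k) (C k)))
     (fun k => ((C k, E k) == nxt (size H) (A k) (E k)) || ((A k, E k) == nxt (size H) (C k) (E k)))
     (fun k => (C k == (A k).+1 %% size H) || (A k == (C k).+1 %% size H))).
  + move=> k; move: (nxt_edge hN' (io_lt Hu Hs (pact (sigma k)^-1 u1)) (io_lt Hu Hs (pact (sigma k)^-1 v1)) (io_lt Hu Hs (pact (sigma k)^-1 w)) (AC k)) => /= [h1 h2].
    by rewrite orbC h1 andbC.
  + rewrite -(Sedge a); apply: eq_card => k; rewrite !inE ce_map (ceH Hu Hs); reflexivity.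
  + move=> i; rewrite ce_map /sig2 !pact_blkV; case: (i < n) => /=; rewrite (ceH2 n1 Hu Hs Hc); reflexivity.
Qed.

End Final.


Theorem corollary3 (n : nat) : 1 <= n ->
  (exists H : seq (vtx n), source_cycle H) ->
  exists H : seq (vtx (2 * n)), source_cycle H.
Proof.
move=> n1 [H [[Hu Hs Hh Hc] [sigma [Scol [Srow Sedge]]]]].
exists (H2 H); split; first exact: (H2_ham n1 Hu Hs Hh Hc).
exists (sig2 sigma); split; [|split].
- by move=> j; apply: sig2_col.
- by move=> i; apply: sig2_row.
- by move=> u v; apply: sig2_edge.
Qed.
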